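(* Let $\mathfrak{f}_1(z)=\sum_{n\ge0}\binom{2n}{n}^2z^n$ and $\mathfrak{f}_2(z)=\sum_{n\ge0}\frac{-1}{2n-1}\binom{2n}{n}^2z^n$. Then $\mathfrak{f}_2\in1+z\mathbb{Z}[[z]]$, and for every prime $p$, $$\mathfrak{f}_{2|p}(z)=P_{2,p}(z)\,(\mathfrak{f}_{1|p}(z))^p\qquad\text{and}\qquad \mathfrak{f}_{2|p}(z)=\frac{P_{1,p}(z)^p}{P_{2,p}(z)^{p-1}}\,\mathfrak{f}_{2|p}(z)^p,$$ where $P_{1,p},P_{2,p}\in\mathbb{F}_p[z]$ are the $p$-truncations of $\mathfrak{f}_1,\mathfrak{f}_2$.
   Context: For $f=\sum a(n)z^n\in\mathbb{Z}[[z]]$, $f_{|p}=\sum(a(n)\bmod p)z^n\in\mathbb{F}_p[[z]]$ and its $p$-truncation is $\sum_{n=0}^{p-1}(a(n)\bmod p)z^n$. *)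

(* Defs.v *)
From mathcomp Require Import ssreflect.
From HB Require Import structures.
From mathcomp Require Import all_boot all_order all_algebra.
Set Implicit Arguments. Unset Strict Implicit. Unset Printing Implicit Defensive.
Import Order.TTheory GRing.Theory Num.Theory.
Local Open Scope ring_scope.

Definition fps (R : comNzRingType) := nat -> R.

Definition fps_mul (R : comNzRingType) (f g : fps R) : fps R :=
  fun n => \sum_(i < n.+1) f i * g (n - i)%N.

Definition fps_one (R : comNzRingType) : fps R := fun n => if n == 0%N then 1 else 0.

Definition fps_exp (R : comNzRingType) (f : fps R) (k : nat) : fps R :=
  iter k (fps_mul f) (fps_one R).

Definition fps_of_poly (R : comNzRingType) (P : {poly R}) : fps R := fun n => P`_n.

(* multiplicative inverse of a power series (meaningful when f 0 is a unit):
   b 0 = (f 0)^-1, b n = - (f 0)^-1 * sum_{k=1}^n f k * b (n-k) *)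
Fixpoint fps_inv_coefs (R : comUnitRingType) (f : nat -> R) (n : nat) : seq R :=
  match n with
  | 0 => [:: (f 0%N)^-1]
  | m.+1 => let s := fps_inv_coefs f m in
            rcons s (- (f 0%N)^-1 *
                     \sum_(1 <= k < m.+2) f k * nth 0 s (m.+1 - k)%N)
  end.

Definition fps_inv (R : comUnitRingType) (f : nat -> R) : nat -> R :=
  fun n => nth 0 (fps_inv_coefs f n) n.

Definition f1_coef (n : nat) : int := ('C(n.*2, n) ^ 2)%N%:Z.

Definition f2_coef (n : nat) : rat :=
  (-1) / ((n.*2)%:R - 1) * (('C(n.*2, n) ^ 2)%N)%:R.

Definition red (p : nat) (a : nat -> int) : fps 'F_p :=
  fun n => (a n)%:~R.

Definition ptrunc (p : nat) (a : nat -> int) : {poly 'F_p} :=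
  \poly_(n < p) ((a n)%:~R : 'F_p).

(* Main.v *)
Require Import Defs.
From HB Require Import structures.
From mathcomp Require Import all_boot all_order all_algebra all_field.
From mathcomp Require Import ring zify.
From Stdlib Require Import FunctionalExtensionality.
Import GRing.Theory Num.Theory.
Local Open Scope ring_scope.

Lemma dvd_c n : (0 < n)%N -> (n.*2.-1 %| 'C(n.*2, n))%N.
Proof.
case: n => [//|m] _.
have e1 := mul_bin_diag (m.*2.+2) m.
have e2 := mul_bin_diag (m.*2.+1) m.
have e3 : 'C(m.*2.+1, m.+1) = 'C(m.*2.+1, m).
  rewrite -{1}(bin_sub (n:=m.*2.+1) (m:=m)); last by lia.
  by congr 'C(_,_); lia.
rewrite e3 /= in e2 e1.
have -> : (m.+1).*2 = m.*2.+2 by lia.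
have -> : (m.*2.+2).-1 = m.*2.+1 by [].
set C2 := 'C(m.*2.+2, m.+1) in e1 *.
set B := 'C(m.*2.+1, m) in e1 e2 *.
set C0 := 'C(m.*2, m) in e2 *.
have h : (m.+1 * C2 = (m.*2.+1) * (2 * C0))%N by nia.
have -> : C2 = (2 * (m.+1 * C2) - m.*2.+1 * C2)%N by nia.
apply: dvdn_sub; last exact: dvdn_mulr.
by rewrite h mulnCA dvdn_mulr.
Qed.

Definition cc n := 'C(n.*2, n).
Definition kk n := (cc n %/ n.*2.-1)%N.
Definition aa n : int := if n == 0%N then 1 else - ((kk n * cc n)%N%:Z).

Lemma kkE n : (0 < n)%N -> (kk n * n.*2.-1 = cc n)%N.
Proof. by move=> h; rewrite /kk divnK // dvd_c. Qed.

Lemma aform (R : comNzRingType) n : (0 < n)%N ->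
  ((aa n)%:~R : R) = - ((kk n)%:R * (cc n)%:R).
Proof.
by case: n => [//|n] _; rewrite /aa /= mulrNz -natrM.
Qed.



Lemma two_sub1 (R : comNzRingType) n : (0 < n)%N ->
  ((n.*2)%:R - 1 : R) = (n.*2.-1)%:R.
Proof.
move=> h; have -> : n.*2 = (n.*2.-1).+1 by lia.
by rewrite -natr1 addrK.
Qed.

Lemma aeq (R : comNzRingType) n :
  ((aa n)%:~R : R) * ((n.*2)%:R - 1) = - ((cc n)%:R ^+ 2).
Proof.
case: (posnP n) => [->|h].
  by rewrite /aa /cc /= bin0 double0 mulr0n (_ : (1%:~R : R) = 1) //; ring.
rewrite aform // two_sub1 // -(kkE _ h) natrM.
ring.
Qed.

Lemma f2_ok n : (aa n)%:~R = f2_coef n.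
Proof.
rewrite /f2_coef; case: (posnP n) => [->|h].
  by rewrite /aa /= bin0 double0 mulr0n sub0r invrN invr1 mulrN1 opprK exp1n mul1r.
rewrite two_sub1 // aform // -/(cc n) -(kkE _ h) natrX !natrM.
have hd : ((n.*2.-1)%:R : rat) != 0 by rewrite pnatr_eq0; lia.
field; exact: hd.
Qed.

Lemma coefXadd1n (R : comNzRingType) n k :
  ((('X + 1) ^+ n)`_k : R) = ('C(n, k))%:R.
Proof.
elim: n k => [|n IH] k.
  by rewrite expr0 coef1 bin0n; case: k.
rewrite exprSr mulrDr mulr1 coefD coefMX IH.
case: k => [|k] /=; first by rewrite add0r IH !bin0.
by rewrite IH binS natrD addrC.
Qed.

Lemma coef_mul_comp (R : comNzRingType) (p : nat) (P Q : {poly R}) j :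
  (0 < p)%N -> (forall i, (p <= i)%N -> P`_i = 0) ->
  (P * (Q \Po 'X^p))`_j = P`_(j %% p) * Q`_(j %/ p).
Proof.
move=> p0 hP.
have hj : (j %% p < j.+1)%N by rewrite ltnS leq_mod.
rewrite coefM (bigD1 (Ordinal hj)) //= big1 ?addr0.
  have e : (j - j %% p = j %/ p * p)%N by rewrite {1}(divn_eq j p) addnK.
  by rewrite coef_comp_poly_Xn // e dvdn_mull // mulnK.
move=> i hne.
case: (leqP p i) => hi; first by rewrite hP // mul0r.
rewrite coef_comp_poly_Xn // ifN ?mulr0 //.
apply/negP => hd; move/negP: hne; apply; apply/eqP/val_inj => /=.
have hij : (i <= j)%N by rewrite -ltnS ltn_ord.
have -> : (j %% p = ((j - i) + i) %% p)%N by rewrite subnK. rewrite -modnDml.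
by move: (hd); rewrite /dvdn => /eqP ->; rewrite add0n modn_small.
Qed.

Lemma frob (p : nat) (pp : prime p) (q : {poly 'F_p}) : q ^+ p = q \Po 'X^p.
Proof.
have hc : p \in [pchar {poly 'F_p}] by rewrite (pchar_poly _ p) pchar_Fp.
elim/poly_ind: q => [|q c IH].
  by rewrite expr0n gtn_eqF ?prime_gt0 // comp_poly0.
rewrite comp_poly_MXaddC -IH -!(pFrobenius_autE hc).
rewrite pFrobenius_autD_comm; last exact: mulrC.
rewrite pFrobenius_autM_comm; last exact: mulrC.
rewrite !pFrobenius_autE -rmorphXn.
have -> : c ^+ p = c by have := expf_card c; rewrite card_Fp.
by [].
Qed.

Lemma modp_small_add p c d : (c < p)%N -> ((c + d * p) %% p = c)%N.
Proof. by move=> h; rewrite addnC modnMDl modn_small. Qed.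
Lemma divp_small_add p c d : (c < p)%N -> ((c + d * p) %/ p = d)%N.
Proof.
move=> h; rewrite addnC divnMDl ?divn_small ?addn0 //; lia.
Qed.

Lemma lucas p (pp : prime p) a b c d : (a < p)%N -> (c < p)%N ->
  ('C(a + b * p, c + d * p))%:R = ('C(a, c))%:R * ('C(b, d))%:R :> 'F_p.
Proof.
move=> ha hc.
rewrite -!(coefXadd1n 'F_p) exprD exprM frob // coef_mul_comp ?prime_gt0 //.
  by rewrite modp_small_add // divp_small_add.
by move=> i hi; rewrite coefXadd1n bin_small //; lia.
Qed.

Lemma cc0 p (pp : prime p) r : (r < p)%N -> (p <= r.*2)%N -> (cc r)%:R = 0 :> 'F_p.
Proof.
move=> h1 h2; rewrite /cc.
have -> : 'C(r.*2, r) = 'C((r.*2 - p) + 1 * p, r + 0 * p) by congr 'C(_,_); lia.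
rewrite lucas //; last by lia.
rewrite bin_small ?mul0r //; lia.
Qed.

Lemma cc_lucas p (pp : prime p) r q : (r < p)%N ->
  (cc (r + q * p)%N)%:R = (cc r)%:R * (cc q)%:R :> 'F_p.
Proof.
move=> hr; rewrite /cc; case: (ltnP r.*2 p) => h.
  have -> : ((r + q * p).*2 = r.*2 + q.*2 * p)%N by rewrite doubleD doubleMl.
  by rewrite lucas.
have -> : ((r + q * p).*2 = (r.*2 - p) + (q.*2).+1 * p)%N.
  rewrite doubleD doubleMl mulSn; lia.
rewrite lucas //; last by lia.
rewrite bin_small ?mul0r; last by lia.
by rewrite -/(cc r) cc0 // mul0r.
Qed.

Lemma a_lucas p (pp : prime p) r q : (r < p)%N ->
  ((aa (r + q * p)%N)%:~R : 'F_p) = (aa r)%:~R * ((cc q)%:R ^+ 2).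
Proof.
move=> hr.
have ej : (((r + q * p).*2)%:R - 1 : 'F_p) = (r.*2)%:R - 1.
  by rewrite doubleD doubleMl natrD natrM pchar_Fp_0 // mulr0 addr0.
case: (eqVneq ((r.*2)%:R - 1 : 'F_p) 0) => he.
  have r0 : (0 < r)%N.
    case: r hr he {ej} => [|r] // _; rewrite double0 mulr0n sub0r => /eqP.
    by rewrite oppr_eq0 oner_eq0.
  have hp : (p <= r.*2)%N.
    case: (leqP p r.*2) => // h.
    move: he; rewrite two_sub1 // => /eqP; rewrite -(dvdn_pcharf (pchar_Fp pp)).
    move/dvdn_leq; lia.
  rewrite !aform //; last by lia.
  by rewrite cc_lucas // cc0 // !(mulr0, mul0r, oppr0).
apply: (mulIf he); rewrite -{1}ej (aeq _ (r + q * p)%N) mulrAC aeq cc_lucas //.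
by rewrite exprMn mulNr.
Qed.

Section FPS.
Variable R : comNzRingType.
Implicit Types X Y : {poly R}.
Implicit Types f g : fps R.

Definition T N f : {poly R} := \poly_(i < N) f i.

Lemma tk_id N X : take_poly N (take_poly N X) = take_poly N X.
Proof. by rewrite take_poly_id // size_take_poly. Qed.

Lemma tkM N X Y :
  take_poly N (X * Y) = take_poly N (take_poly N X * take_poly N Y).
Proof.
apply/polyP => i; rewrite !coef_take_poly; case: ltnP => // hi.
rewrite !coefM; apply: eq_bigr => k _; rewrite !coef_take_poly.
have hk := ltn_ord k.
rewrite ifT; last by lia.
by rewrite ifT //; lia.
Qed.

Lemma cong_mul N X X' Y Y' : take_poly N X = take_poly N X' ->
  take_poly N Y = take_poly N Y' -> take_poly N (X * Y) = take_poly N (X' * Y').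
Proof. by move=> e1 e2; rewrite tkM e1 e2 -tkM. Qed.

Lemma cong_exp N X X' k : take_poly N X = take_poly N X' ->
  take_poly N (X ^+ k) = take_poly N (X' ^+ k).
Proof.
move=> e; elim: k => [|k IH]; first by rewrite !expr0.
by rewrite !exprS; apply: cong_mul.
Qed.

Lemma coef_tk N X i : (i < N)%N -> X`_i = (take_poly N X)`_i.
Proof. by move=> h; rewrite coef_take_poly h. Qed.

Lemma coef_T N f i : (i < N)%N -> (T N f)`_i = f i.
Proof. by move=> h; rewrite coef_poly h. Qed.

Lemma T_mul N f g : T N (fps_mul f g) = take_poly N (T N f * T N g).
Proof.
apply/polyP => i; rewrite coef_poly coef_take_poly; case: ltnP => // hi.
rewrite coefM /fps_mul; apply: eq_bigr => k _.
have hk := ltn_ord k.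
rewrite !coef_T //; lia.
Qed.

Lemma T_one N : T N (fps_one R) = take_poly N 1.
Proof.
apply/polyP => i; rewrite coef_poly coef_take_poly coef1 /fps_one.
by case: ltnP => // _; case: (i == 0%N).
Qed.

Lemma T_exp N f k : T N (fps_exp f k) = take_poly N (T N f ^+ k).
Proof.
elim: k => [|k IH]; first by rewrite expr0 -T_one.
have -> : fps_exp f k.+1 = fps_mul f (fps_exp f k) by [].
rewrite T_mul IH exprS [RHS]tkM [in LHS]tkM tk_id.
congr (take_poly N (_ * _)).
Qed.

Lemma T_poly N P : T N (fps_of_poly P) = take_poly N P.
Proof. by []. Qed.

End FPS.
Arguments T {R}. Arguments tk_id {R}. Arguments tkM {R}. Arguments cong_mul {R N X X' Y Y'}. Arguments cong_exp {R N X X'}. Arguments coef_tk {R N} X {i}. Arguments coef_T {R} N f {i}. Arguments T_mul {R}. Arguments T_one {R}. Arguments T_exp {R}. Arguments T_poly {R}.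

Section Inv.
Variable R : comUnitRingType.
Implicit Types f : fps R.

Lemma size_inv_coefs f n : size (fps_inv_coefs f n) = n.+1.
Proof. by elim: n => [//|n IH] /=; rewrite size_rcons IH. Qed.

Lemma inv_prefix f n j : (j <= n)%N -> nth 0 (fps_inv_coefs f n) j = fps_inv f j.
Proof.
elim: n => [|n IH] hj.
  by have -> : j = 0%N by lia.
case: (ltnP j n.+1) => h.
  by rewrite /= nth_rcons size_inv_coefs h IH.
have -> : j = n.+1 by lia.
by [].
Qed.

Lemma inv_rec f m : fps_inv f m.+1 =
  - (f 0%N)^-1 * \sum_(1 <= k < m.+2) f k * fps_inv f (m.+1 - k).
Proof.
rewrite /fps_inv /= nth_rcons size_inv_coefs ltnn eqxx.
congr (_ * _); rewrite !big_nat; apply: eq_bigr => k hk.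
by rewrite inv_prefix //; lia.
Qed.

Lemma fps_mul_inv f n : f 0%N \is a GRing.unit -> fps_mul f (fps_inv f) n = fps_one R n.
Proof.
move=> hu; rewrite /fps_mul /fps_one.
case: n => [|m] /=.
  by rewrite big_ord1 subnn /fps_inv /= mulrV.
rewrite big_ord_recl /= subn0 inv_rec mulrA mulrN mulrV // mulN1r.
rewrite big_add1 /= big_mkord.
rewrite [X in - X + _](_ : _ = \sum_(i < m.+1) f (bump 0 i) * fps_inv f (m.+1 - bump 0 i)) ?addNr //.
Qed.

End Inv.


Arguments a_lucas {p}. Arguments cc_lucas {p}. Arguments fps_mul_inv {R}.
Lemma red_f1 p j : red p f1_coef j = (cc j)%:R ^+ 2 :> 'F_p.
Proof. by rewrite /red /f1_coef -natrX. Qed.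

Lemma coef0X (R : comNzRingType) (X : {poly R}) k : (X ^+ k)`_0 = X`_0 ^+ k.
Proof.
elim: k => [|k IH]; first by rewrite !expr0 coef1.
by rewrite !exprS coef0M IH.
Qed.

Theorem mainTheorem14 :
  exists a : nat -> int,
    (forall n, (a n)%:~R = f2_coef n :> rat) /\ a 0%N = 1 /\
    forall p : nat, prime p ->
      let f1p := red p f1_coef in
      let f2p := red p a in
      let P1 := ptrunc p f1_coef in
      let P2 := ptrunc p a in
      f2p = fps_mul (fps_of_poly P2) (fps_exp f1p p) /\
      f2p = fps_mul (fps_mul (fps_exp (fps_of_poly P1) p)
                             (fps_inv (fps_exp (fps_of_poly P2) p.-1)))
                    (fps_exp f2p p).
Proof.
exists aa; split; first exact: f2_ok.
split; first by [].
move=> p pp f1p f2p P1 P2.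
have p0 := prime_gt0 pp.
have hP2 : forall i, (p <= i)%N -> P2`_i = 0.
  by move=> i hi; rewrite /P2 /ptrunc coef_poly ltnNge hi.
have hP1 : forall i, (p <= i)%N -> P1`_i = 0.
  by move=> i hi; rewrite /P1 /ptrunc coef_poly ltnNge hi.
have h1 : forall N, take_poly N (T N f2p) = take_poly N (P2 * T N f1p ^+ p).
  move=> N; apply/polyP => j; rewrite !coef_take_poly; case: ltnP => // hj.
  rewrite coef_T // frob // coef_mul_comp // /P2 /ptrunc coef_poly ltn_pmod //.
  rewrite coef_T; last by apply: leq_ltn_trans hj; apply: leq_div.
  have e := a_lucas pp (j %% p) (j %/ p) (ltn_pmod j p0).
  rewrite addnC -divn_eq in e.
  by rewrite /f2p /red e /f1p red_f1.
have h2 : forall N, take_poly N (T N f1p) = take_poly N (P1 * T N f1p ^+ p).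
  move=> N; apply/polyP => j; rewrite !coef_take_poly; case: ltnP => // hj.
  rewrite coef_T // frob // coef_mul_comp // /P1 /ptrunc coef_poly ltn_pmod //.
  rewrite coef_T; last by apply: leq_ltn_trans hj; apply: leq_div.
  have e := cc_lucas pp (j %% p) (j %/ p) (ltn_pmod j p0).
  rewrite addnC -divn_eq in e.
  rewrite /f1p !red_f1 e exprMn; congr (_ * _); exact: (esym (red_f1 p _)).
split.
  apply: functional_extensionality => n.
  have hN : (n < n.+1)%N by [].
  rewrite -(coef_T n.+1 f2p hN) -[RHS](coef_T n.+1 _ hN) T_mul T_poly T_exp -tkM.
  by rewrite (coef_tk _ hN) h1 -coef_tk.
apply: functional_extensionality => n.
have hN : (n < n.+1)%N by [].
set N := n.+1.
set G := fps_exp (fps_of_poly P2) p.-1.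
have hG : forall M, take_poly M (T M G) = take_poly M (P2 ^+ p.-1).
  move=> M; rewrite /G T_exp T_poly tk_id; apply: cong_exp; exact: tk_id.
have G0 : G 0%N = 1.
  rewrite -(coef_T 1 G (ltnSn 0)) (coef_tk _ (ltnSn 0)) hG -coef_tk //.
  by rewrite coef0X /P2 /ptrunc coef_poly p0 /= expr1n.
have hI : take_poly N (P2 ^+ p.-1 * T N (fps_inv G)) = take_poly N 1.
  rewrite -(cong_mul (hG N) (erefl (take_poly N (T N (fps_inv G))))).
  rewrite -T_mul -T_one; apply/polyP => i; rewrite !coef_poly.
  by case: ltnP => // _; rewrite fps_mul_inv // G0 unitr1.
rewrite -(coef_T N f2p hN) -[RHS](coef_T N _ hN) T_mul T_mul -/G tkM tk_id -tkM.
rewrite (coef_tk (T N f2p) hN); congr (_`_n); apply: esym.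
set TI := T N (fps_inv G).
set F1 := T N f1p; set F2 := T N f2p.
have eTA : take_poly N (T N (fps_exp (fps_of_poly P1) p)) = take_poly N (P1 ^+ p).
  by rewrite T_exp T_poly tk_id; apply: cong_exp; exact: tk_id.
rewrite (cong_mul (cong_mul eTA (erefl (take_poly N TI))) (erefl (take_poly N (T N (fps_exp f2p p))))).
rewrite (cong_mul (erefl (take_poly N (P1 ^+ p * TI)))
   (_ : take_poly N (T N (fps_exp f2p p)) = take_poly N ((P2 * F1 ^+ p) ^+ p))); last first.
  by rewrite T_exp tk_id; apply: cong_exp; exact: h1.
have alg : P1 ^+ p * TI * (P2 * F1 ^+ p) ^+ p
         = (P2 ^+ p.-1 * TI) * (P2 * (P1 * F1 ^+ p) ^+ p).
  rewrite !exprMn.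
  have -> : P2 ^+ p = P2 ^+ p.-1 * P2 by rewrite -exprSr prednK.
  ring.
rewrite alg (cong_mul hI (erefl (take_poly N (P2 * (P1 * F1 ^+ p) ^+ p)))) mul1r.
rewrite (cong_mul (erefl (take_poly N P2)) (cong_exp p (esym (h2 N)))).
by rewrite -h1.
Qed.
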